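(* Let $\oplus$ be the functor from $\textnormal{\textbf{Conv}}\times\textnormal{\textbf{Conv}}$ to $\textnormal{\textbf{Conv}}$ which takes pairs of Euclidean spaces $(\mathbb{R}^n,\mathbb{R}^m)$ to their direct sum $\mathbb{R}^n\oplus \mathbb{R}^m$ and takes pairs of bifunctions ($F$ from $\mathbb{R}^m$ to $\mathbb{R}^n$, $G$ from $\mathbb{R}^p$ to $\mathbb{R}^q$) to their pointwise sum, i.e., the bifunction $F\oplus G$ from $\mathbb{R}^m\oplus\mathbb{R}^p$ to $\mathbb{R}^n\oplus\mathbb{R}^q$ given by \begin{multline*} (F\oplus G)((u,y),(x,z)) = F(u,x) + G(y,z) \\ \text{ for all } u\in\mathbb{R}^m,x\in\mathbb{R}^n,y\in\mathbb{R}^p, \textnormal{and } z\in\mathbb{R}^q. \end{multline*} Then $(\textnormal{\textbf{Conv}}, \oplus, \mathbb{R}^0)$ is a strict symmetric monoidal category.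
   Context: $\textnormal{\textbf{Conv}}$ is the category whose objects are Euclidean spaces, whose morphisms from $\mathbb{R}^m$ to $\mathbb{R}^n$ are convex bifunctions, i.e., jointly convex functions $F\colon\mathbb{R}^m\times\mathbb{R}^n\to\mathbb{R}\cup\{\pm\infty\}$, with identity $\mathrm{id}_X(x,x')=0$ if $x=x'$ and $+\infty$ otherwise, and composition $(G\circ F)(u,y)=\inf_{x}\{F(u,x)+G(x,y)\}$. *)

(* Defs.v *)
From HB Require Import structures.
From mathcomp Require Import all_boot all_order all_algebra.
From mathcomp Require Import all_classical all_reals ereal.
Set Implicit Arguments. Unset Strict Implicit. Unset Printing Implicit Defensive.
Import Order.TTheory GRing.Theory Num.Theory.
Local Open Scope ring_scope.

(* The Euclidean space R^n is modelled as row vectors 'rV[R]_n; objects of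
   Conv are identified with their dimension n : nat. *)

Definition bifun (R : realType) (m n : nat) := 'rV[R]_m -> 'rV[R]_n -> \bar R.

(* Inf-addition (Rockafellar's convention +oo + -oo = +oo). *)
Definition iadd (R : realType) (a b : \bar R) : \bar R := dual_adde a b.

(* Joint convexity of an extended-real-valued function: its epigraph
   {((u,x),mu) | F u x <= mu} is convex. *)
Definition convex_bifun (R : realType) (m n : nat) (F : bifun R m n) : Prop :=
  forall (u u' : 'rV[R]_m) (x x' : 'rV[R]_n) (a b t : R),
    (F u x <= a%:E)%E -> (F u' x' <= b%:E)%E -> 0 <= t <= 1 ->
    (F (t *: u + (1 - t) *: u')%R (t *: x + (1 - t) *: x')%R
       <= (t * a + (1 - t) * b)%:E)%E.

Definition id_bif (R : realType) (n : nat) : bifun R n n :=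
  fun x x' => if x == x' then 0%E else +oo%E.

(* Composition: bcomp F G = G o F, (G o F)(u,y) = inf_x F(u,x) + G(x,y). *)
Definition bcomp (R : realType) (m n p : nat) (F : bifun R m n) (G : bifun R n p)
  : bifun R m p :=
  fun u y => ereal_inf [set iadd (F u x) (G x y) | x in [set: 'rV[R]_n]]%classic.

(* The direct sum F (+) G : R^m (+) R^p -> R^n (+) R^q, where R^m (+) R^p is
   'rV_(m + p) with (u, y) represented by row_mx u y. *)
Definition dsum (R : realType) (m n p q : nat) (F : bifun R m n) (G : bifun R p q)
  : bifun R (m + p) (n + q) :=
  fun a b => iadd (F (lsubmx a) (lsubmx b)) (G (rsubmx a) (rsubmx b)).

Definition castbf (R : realType) (m n m' n' : nat) (e1 : m = m') (e2 : n = n')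
  (F : bifun R m n) : bifun R m' n' :=
  fun a b => F (castmx (erefl 1%N, esym e1) a) (castmx (erefl 1%N, esym e2) b).

(* Main.v *)
Require Import Defs.
From HB Require Import structures.
From mathcomp Require Import all_boot all_order all_algebra.
From mathcomp Require Import all_classical all_reals ereal.
From mathcomp Require Import ring lra.
Import Order.TTheory GRing.Theory Num.Theory.
Set Implicit Arguments. Unset Strict Implicit.
Import DualAddTheory.
Local Open Scope classical_set_scope.
Local Open Scope ereal_scope.

Section H.
Variable R : realType.
Implicit Types a b c : \bar R.

Lemma iaddC a b : iadd a b = iadd b a.
Proof. exact: daddeC. Qed.
Lemma iaddA a b c : iadd a (iadd b c) = iadd (iadd a b) c.
Proof. exact: daddeA. Qed.
Lemma iadd0e a : iadd 0 a = a.
Proof. exact: dadd0e. Qed.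
Lemma iadde0 a : iadd a 0 = a.
Proof. by rewrite iaddC iadd0e. Qed.
Lemma iaddye a : iadd +oo a = +oo. Proof. by case: a. Qed.
Lemma iaddey a : iadd a +oo = +oo. Proof. by case: a. Qed.
Lemma iadd_le a b c d : a <= b -> c <= d -> iadd a c <= iadd b d.
Proof. exact: lee_dD. Qed.
Lemma iaddr a (r : R) : iadd a r%:E = a + r%:E.
Proof. case: a => [a||] //; by rewrite /iadd -dEFinD -EFinD. Qed.
Lemma iaddACA a b c d : iadd (iadd a b) (iadd c d) = iadd (iadd a c) (iadd b d).
Proof. by rewrite -!iaddA (iaddA b) (iaddC b c) -iaddA. Qed.

Lemma inf_pt (T : Type) (f g : T -> \bar R) x0 :
  f x0 = 0 -> (forall x, x <> x0 -> f x = +oo) ->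
  ereal_inf [set iadd (f x) (g x) | x in [set: T]] = g x0.
Proof.
move=> f0 fy; apply/eqP; rewrite eq_le; apply/andP; split.
  by apply: ereal_inf_lbound; exists x0 => //; rewrite f0 iadd0e.
apply: le_ereal_inf_tmp => _ [x _ <-].
have [->|nx] := pselect (x = x0); first by rewrite f0 iadd0e.
by rewrite fy // iaddye leey.
Qed.

Lemma inf_pt_r (T : Type) (f g : T -> \bar R) x0 :
  f x0 = 0 -> (forall x, x <> x0 -> f x = +oo) ->
  ereal_inf [set iadd (g x) (f x) | x in [set: T]] = g x0.
Proof.
move=> f0 fy; rewrite -(@inf_pt T f g x0 f0 fy); congr ereal_inf.
by apply/seteqP; split => _ [x _ <-]; exists x => //; rewrite iaddC.
Qed.

Lemma inf_addc (T : Type) (f : T -> \bar R) c :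
  ereal_inf [set iadd (f x) c | x in [set: T]] =
  iadd (ereal_inf [set f x | x in [set: T]]) c.
Proof.
apply/eqP; rewrite eq_le; apply/andP; split; last first.
  apply: le_ereal_inf_tmp => _ [x _ <-]; apply: iadd_le => //.
  by apply: ereal_inf_lbound; exists x.
case: c => [r||]; last 2 first.
- by rewrite iaddey leey.
- have [[x _ fx]|] := pselect (exists2 x, [set: T] x & f x != +oo).
    apply: (le_trans (ereal_inf_lbound _)); first by exists x.
    have -> : iadd (f x) -oo = -oo by case: (f x) fx.
    by rewrite leNye.
  move=> /forall2NP H.
  have Hf : forall x, f x = +oo.
    by move=> x; case: (H x) => [/(_ I)//|/negP/negPn/eqP].
  have -> : ereal_inf [set f x | x in [set: T]] = +oo.
    apply/eqP; rewrite eq_le leey /=; apply: le_ereal_inf_tmp => _ [x _ <-].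
    by rewrite Hf.
  by rewrite iaddye leey.
rewrite iaddr -leeBlDr //.
apply: le_ereal_inf_tmp => _ [x _ <-].
rewrite leeBlDr // -iaddr.
by apply: ereal_inf_lbound; exists x.
Qed.

Lemma inf_cadd (T : Type) (f : T -> \bar R) c :
  ereal_inf [set iadd c (f x) | x in [set: T]] =
  iadd c (ereal_inf [set f x | x in [set: T]]).
Proof.
rewrite iaddC -inf_addc; congr ereal_inf.
by apply/seteqP; split => _ [x _ <-]; exists x => //; rewrite iaddC.
Qed.

Lemma inf_sum2 (T T1 T2 : Type) (h : T -> \bar R) (f : T1 -> \bar R) (g : T2 -> \bar R)
  (p1 : T -> T1) (p2 : T -> T2) :
  (forall X, h X = iadd (f (p1 X)) (g (p2 X))) ->
  (forall x y, exists X, p1 X = x /\ p2 X = y) ->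
  iadd (ereal_inf [set f x | x in [set: T1]]) (ereal_inf [set g y | y in [set: T2]])
  = ereal_inf [set h X | X in [set: T]].
Proof.
move=> hE surj; apply/eqP; rewrite eq_le; apply/andP; split.
  apply: le_ereal_inf_tmp => _ [X _ <-]; rewrite hE; apply: iadd_le.
    by apply: ereal_inf_lbound; exists (p1 X).
  by apply: ereal_inf_lbound; exists (p2 X).
rewrite -inf_addc; apply: le_ereal_inf_tmp => _ [x _ <-].
rewrite -inf_cadd; apply: le_ereal_inf_tmp => _ [y _ <-].
have [X [<- <-]] := surj x y.
by apply: ereal_inf_lbound; exists X => //; rewrite hE.
Qed.


Lemma iadd_ind (P Q : bool) :
  iadd (if P then 0 else +oo) (if Q then 0 else +oo) = (if P && Q then 0 else +oo : \bar R).
Proof. by case: P Q => [] [] /=; rewrite ?iadd0e ?iaddye ?iaddey. Qed.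

Lemma split_le a b (c : R) : iadd a b <= c%:E ->
  exists a1 a2 : R, a <= a1%:E /\ b <= a2%:E /\ (a1 + a2 = c)%R.
Proof.
case: a => [r1||]; case: b => [r2||] H.
- exists r1, (c - r1)%R; rewrite iaddr -EFinD lee_fin in H.
  by rewrite !lee_fin; split => //; split; [lra|lra].
- by rewrite iaddey in H.
- exists r1, (c - r1)%R; split => //; split; [by rewrite leNye|lra].
- by rewrite iaddye in H.
- by rewrite iaddye in H.
- by rewrite iaddye in H.
- exists (c - r2)%R, r2; split; [by rewrite leNye|split => //; lra].
- by rewrite iaddey in H.
- by exists c, 0%R; split; [by rewrite leNye|split; [by rewrite leNye|lra]].
Qed.

End H.

Section M.
Variable R : realType.
Local Open Scope ring_scope.

Lemma lsub_comb m n (t s : R) (a a' : 'rV[R]_(m + n)) :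
  lsubmx (t *: a + s *: a') = t *: lsubmx a + s *: lsubmx a'.
Proof. by apply/matrixP => i j; rewrite !mxE. Qed.
Lemma rsub_comb m n (t s : R) (a a' : 'rV[R]_(m + n)) :
  rsubmx (t *: a + s *: a') = t *: rsubmx a + s *: rsubmx a'.
Proof. by apply/matrixP => i j; rewrite !mxE. Qed.

Lemma eq_row_mxb m n (u u' : 'rV[R]_m) (v v' : 'rV[R]_n) :
  (row_mx u v == row_mx u' v') = (u == u') && (v == v').
Proof.
apply/eqP/andP => [/eq_row_mx [-> ->]//|[/eqP -> /eqP ->]//].
Qed.

Lemma split2 m n (a : 'rV[R]_(m + n)) : exists u v, a = row_mx u v.
Proof. by exists (lsubmx a), (rsubmx a); rewrite hsubmxK. Qed.

Lemma castmx_pi m1 n1 m2 n2 (e e' : (m1 = m2) * (n1 = n2)) (A : 'M[R]_(m1, n1)) :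
  castmx e A = castmx e' A.
Proof.
case: e e' => [e1 e2] [e1' e2'].
by rewrite (eq_irrelevance e1 e1') (eq_irrelevance e2 e2').
Qed.

Lemma cast_rA m n p (e : (m + n + p = m + (n + p))%N) (a1 : 'rV[R]_m) (a2 : 'rV[R]_n) (a3 : 'rV[R]_p) :
  castmx (erefl 1%N, e) (row_mx (row_mx a1 a2) a3) = row_mx a1 (row_mx a2 a3).
Proof. by rewrite row_mxA; apply: castmx_pi. Qed.

Lemma cast_lA m n p (e : (m + (n + p) = m + n + p)%N) (a1 : 'rV[R]_m) (a2 : 'rV[R]_n) (a3 : 'rV[R]_p) :
  castmx (erefl 1%N, e) (row_mx a1 (row_mx a2 a3)) = row_mx (row_mx a1 a2) a3.
Proof. by rewrite row_mxA castmx_comp castmx_id. Qed.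

Lemma rsub0 m (a : 'rV[R]_(0 + m)) (e : (0 + m = m)%N) :
  rsubmx a = castmx (erefl 1%N, e) a.
Proof.
apply/matrixP => i j; rewrite castmxE mxE; congr (a _ _); first by apply/val_inj.
by apply/val_inj.
Qed.

Lemma lsub0 m (a : 'rV[R]_(m + 0)) (e : (m + 0 = m)%N) :
  lsubmx a = castmx (erefl 1%N, e) a.
Proof.
apply/matrixP => i j; rewrite castmxE mxE; congr (a _ _); first by apply/val_inj.
by apply/val_inj.
Qed.

Definition swp m n (a : 'rV[R]_(m + n)) : 'rV[R]_(n + m) := row_mx (rsubmx a) (lsubmx a).
Lemma swp_row m n (u : 'rV[R]_m) (v : 'rV[R]_n) : swp (row_mx u v) = row_mx v u.
Proof. by rewrite /swp row_mxKl row_mxKr. Qed.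
Lemma swpK m n (a : 'rV[R]_(m + n)) : swp (swp a) = a.
Proof. by rewrite /swp row_mxKl row_mxKr hsubmxK. Qed.
Lemma swp_comb m n (t s : R) (a a' : 'rV[R]_(m + n)) :
  swp (t *: a + s *: a') = t *: swp a + s *: swp a'.
Proof. by rewrite /swp lsub_comb rsub_comb !scale_row_mx add_row_mx. Qed.

Definition sig m n : bifun R (m + n) (n + m) :=
  fun a b => if b == swp a then 0%E else +oo%E.

End M.

Section P.
Variable R : realType.

Lemma partA (m n p q : nat) (F : bifun R m n) (G : bifun R p q) :
  convex_bifun F -> convex_bifun G -> convex_bifun (dsum F G).
Proof.
move=> cF cG u u' x x' a b t Ha Hb Ht.
have [a1 [a2 [Fa [Ga Ea]]]] := split_le Ha.
have [b1 [b2 [Fb [Gb Eb]]]] := split_le Hb.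
rewrite /dsum !lsub_comb !rsub_comb.
apply: le_trans (iadd_le (cF _ _ _ _ _ _ _ Fa Fb Ht) (cG _ _ _ _ _ _ _ Ga Gb Ht)) _.
rewrite iaddr -EFinD lee_fin -Ea -Eb.
rewrite le_eqVlt; apply/orP; left; apply/eqP; ring.
Qed.

Lemma partB (m n : nat) : dsum (@id_bif R m) (@id_bif R n) = @id_bif R (m + n).
Proof.
apply/funext => a; apply/funext => b; rewrite /dsum /id_bif iadd_ind.
have [u [v ->]] := split2 a; have [u' [v' ->]] := split2 b.
by rewrite !row_mxKl !row_mxKr eq_row_mxb.
Qed.

Lemma partC (m n k p q r : nat) (F : bifun R m n) (F' : bifun R n k)
          (G : bifun R p q) (G' : bifun R q r) :
     dsum (bcomp F F') (bcomp G G') = bcomp (dsum F G) (dsum F' G').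
Proof.
apply/funext => a; apply/funext => b; rewrite /dsum /bcomp.
apply: (@inf_sum2 R _ _ _ _ (fun x => iadd (F (lsubmx a) x) (F' x (lsubmx b)))
   (fun x => iadd (G (rsubmx a) x) (G' x (rsubmx b))) (@lsubmx _ 1 n q) (@rsubmx _ 1 n q)).
  by move=> X /=; rewrite iaddACA.
by move=> x y; exists (row_mx x y); rewrite row_mxKl row_mxKr.
Qed.

Lemma partD (m n p q r s : nat) (F : bifun R m n) (G : bifun R p q) (H : bifun R r s) :
     dsum (dsum F G) H = castbf (addnA m p r) (addnA n q s) (dsum F (dsum G H)).
Proof.
apply/funext => a; apply/funext => b; rewrite /dsum /castbf.
have [a' [a3 ->]] := split2 a; have [a1 [a2 ->]] := split2 a'.
have [b' [b3 ->]] := split2 b; have [b1 [b2 ->]] := split2 b'.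
by rewrite !cast_rA !row_mxKl !row_mxKr ?(row_mxKl a2 a3) ?(row_mxKl b2 b3) iaddA.
Qed.

Lemma partE (m n : nat) (F : bifun R m n) :
     dsum (@id_bif R 0) F = castbf (esym (add0n m)) (esym (add0n n)) F /\
     dsum F (@id_bif R 0) = castbf (esym (addn0 m)) (esym (addn0 n)) F.
Proof.
split; apply/funext => a; apply/funext => b; rewrite /dsum /castbf /id_bif.
  rewrite (thinmx0 (lsubmx a)) (thinmx0 (lsubmx b)) eqxx iadd0e.
  by rewrite -!rsub0.
rewrite (thinmx0 (rsubmx a)) (thinmx0 (rsubmx b)) eqxx iadde0.
by rewrite -!lsub0.
Qed.

End P.

Section S.
Variable R : realType.

Lemma sig_convex m n : convex_bifun (@sig R m n).
Proof.
move=> a a' b b' x y t; rewrite /sig.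
case: eqP => [->|_]; last by [].
case: eqP => [->|_]; last by [].
move=> x0 y0 /andP [t0 t1].
rewrite swp_comb eqxx lee_fin; rewrite lee_fin in x0 y0.
by apply: addr_ge0; apply: mulr_ge0 => //; rewrite subr_ge0.
Qed.

Lemma sig_pt m n (c : 'rV[R]_(n + m)) :
  (forall x, x <> swp c -> @sig R m n x c = +oo%E) /\ @sig R m n (swp c) c = 0%E.
Proof.
rewrite /sig swpK eqxx; split => // x nx.
case: eqP => // E; exfalso; apply: nx; by rewrite E swpK.
Qed.

Lemma sig_pt' m n (a : 'rV[R]_(m + n)) :
  (forall x, x <> swp a -> @sig R m n a x = +oo%E) /\ @sig R m n a (swp a) = 0%E.
Proof.
rewrite /sig eqxx; split => // x nx.
by case: eqP.
Qed.

Lemma partNat (m m' n n' : nat) (F : bifun R m m') (G : bifun R n n') :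
  bcomp (dsum F G) (@sig R m' n') = bcomp (@sig R m n) (dsum G F).
Proof.
apply/funext => a; apply/funext => c; rewrite /bcomp.
have [H1 H2] := sig_pt c; have [H3 H4] := sig_pt' a.
rewrite (@inf_pt_r R _ (fun x => sig x c) (fun x => dsum F G a x) (swp c) H2 H1).
rewrite (@inf_pt R _ (fun x => sig a x) (fun x => dsum G F x c) (swp a) H4 H3).
have [u [v ->]] := split2 a; have [u' [v' ->]] := split2 c.
by rewrite !swp_row /dsum !row_mxKl !row_mxKr iaddC.
Qed.

Lemma partInv m n : bcomp (@sig R m n) (@sig R n m) = @id_bif R (m + n).
Proof.
apply/funext => a; apply/funext => c; rewrite /bcomp.
have [H3 H4] := sig_pt' a.
rewrite (@inf_pt R _ (fun x => sig a x) (fun x => sig x c) (swp a) H4 H3).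
by rewrite /sig /id_bif swpK eq_sym.
Qed.

End S.

Section Hex.
Variable R : realType.

Lemma partHex m n p :
  castbf (addnA m n p) (esym (addnA n p m)) (@sig R m (n + p)) =
  bcomp (castbf (erefl ((m + n) + p)%N) (esym (addnA n m p))
               (dsum (@sig R m n) (@id_bif R p)))
        (dsum (@id_bif R n) (@sig R m p)).
Proof.
apply/funext => a; apply/funext => c; rewrite /bcomp.
have [a' [a3 ->]] := split2 a; have [a1 [a2 ->]] := split2 a'.
have [c1 [c' ->]] := split2 c; have [c2 [c3 ->]] := split2 c'.
pose f := fun x => castbf (erefl ((m + n) + p)%N) (esym (addnA n m p)) (dsum (@sig R m n) (@id_bif R p)) (row_mx (row_mx a1 a2) a3) x.
have fE : forall x, f x = if x == row_mx a2 (row_mx a1 a3) then 0%E else +oo%E.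
  move=> x; rewrite /f /castbf castmx_id.
  have [x1 [x' ->]] := split2 x; have [x2 [x3 ->]] := split2 x'.
  rewrite cast_lA /dsum /sig /id_bif !row_mxKl !row_mxKr swp_row iadd_ind.
  by rewrite !eq_row_mxb andbA (eq_sym a3).
have H1 : f (row_mx a2 (row_mx a1 a3)) = 0%E by rewrite fE eqxx.
have H2 : forall x, x <> row_mx a2 (row_mx a1 a3) -> f x = +oo%E.
  by move=> x nx; rewrite fE; case: eqP.
symmetry; etransitivity; first exact: (@inf_pt R _ f (fun x => dsum (@id_bif R n) (@sig R m p) x (row_mx c1 (row_mx c2 c3))) _ H1 H2).
symmetry.
rewrite /castbf cast_rA cast_lA /dsum /sig /id_bif !row_mxKl !row_mxKr !swp_row iadd_ind.
by rewrite !eq_row_mxb !andbA (eq_sym a2).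
Qed.

End Hex.

Local Close Scope ereal_scope.
Local Close Scope classical_set_scope.

Theorem mainTheorem2 (R : realType) :
  (* (+) sends morphisms of Conv to morphisms of Conv *)
  (forall (m n p q : nat) (F : bifun R m n) (G : bifun R p q),
     convex_bifun F -> convex_bifun G -> convex_bifun (dsum F G)) /\
  (* functoriality: identities *)
  (forall m n : nat, dsum (@id_bif R m) (@id_bif R n) = @id_bif R (m + n)) /\
  (* functoriality: composition *)
  (forall (m n k p q r : nat) (F : bifun R m n) (F' : bifun R n k)
          (G : bifun R p q) (G' : bifun R q r),
     convex_bifun F -> convex_bifun F' -> convex_bifun G -> convex_bifun G' ->
     dsum (bcomp F F') (bcomp G G') = bcomp (dsum F G) (dsum F' G')) /\
  (* strict associativity *)
  (forall (m n p q r s : nat) (F : bifun R m n) (G : bifun R p q) (H : bifun R r s),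
     convex_bifun F -> convex_bifun G -> convex_bifun H ->
     dsum (dsum F G) H = castbf (addnA m p r) (addnA n q s) (dsum F (dsum G H))) /\
  (* strict left and right unit R^0 *)
  (forall (m n : nat) (F : bifun R m n), convex_bifun F ->
     dsum (@id_bif R 0) F = castbf (esym (add0n m)) (esym (add0n n)) F /\
     dsum F (@id_bif R 0) = castbf (esym (addn0 m)) (esym (addn0 n)) F) /\
  (* symmetry *)
  (exists sigma : forall m n : nat, bifun R (m + n) (n + m),
     (forall m n, convex_bifun (sigma m n)) /\
     (* naturality *)
     (forall (m m' n n' : nat) (F : bifun R m m') (G : bifun R n n'),
        convex_bifun F -> convex_bifun G ->
        bcomp (dsum F G) (sigma m' n') = bcomp (sigma m n) (dsum G F)) /\
     (* involutivity *)
     (forall m n, bcomp (sigma m n) (sigma n m) = @id_bif R (m + n)) /\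
     (* hexagon (the associator being the identity) *)
     (forall m n p,
        castbf (addnA m n p) (esym (addnA n p m)) (sigma m (n + p)) =
        bcomp (castbf (erefl ((m + n) + p)%N) (esym (addnA n m p))
                     (dsum (sigma m n) (@id_bif R p)))
             (dsum (@id_bif R n) (sigma m p)))).
Proof.
split; first exact: partA.
split; first exact: partB.
split; first by move=> *; exact: partC.
split; first by move=> *; exact: partD.
split; first by move=> *; exact: partE.
exists (@sig R); split; first exact: sig_convex.
split; first by move=> *; exact: partNat.
split; first exact: partInv.
exact: partHex.
Qed.
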